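(* Assume $|\mathcal S|\ge2$, let $\epsilon,\delta>0$, let $\mathcal V_j\in\mathcal S$, and set $$r^b_{max}=\frac{\epsilon\delta}{\max_{\mathcal V_i\in\mathcal S\setminus\{\mathcal V_j\}}\frac{1}{|F(\mathcal V_i)|}\sum_{v_s\in F(\mathcal V_i)}d(v_s)}.$$ Then GBP$(G,\mathcal S,\mathcal V_j,r^b_{max})$ terminates, and its output $\hat\pi_d(\mathcal V_i,\mathcal V_j)$ is an $(\epsilon,\delta)$-approximation of $\pi_d(\mathcal V_i,\mathcal V_j)$ for every $\mathcal V_i\in\mathcal S$ with $\mathcal V_i\ne\mathcal V_j$.
   Context: $G=(V,E)$ is a directed graph with $n$ nodes and $m$ edges, no self-loops, and every node of out-degree $d(v)\ge1$; $\alpha\in(0,1)$. PPR $\pi(u,v)$: probability that a random walk from $u$ which at each step stops with probability $\alpha$ and otherwise moves to a uniformly random out-neighbor stops at $v$; $\pi_d(u,v)=d(u)\pi(u,v)$. A collection $\mathcal S=\{\mathcal V_1,\dots,\mathcal V_k\}$ of supernodes is given, each $\mathcal V_i$ having a nonempty leaf set $F(\mathcal V_i)\subseteq V$, the leaf sets being pairwise disjoint. For supernodes, $\pi_d(\mathcal V_i,\mathcal V_j)=\frac{1}{|F(\mathcal V_i)||F(\mathcal V_j)|}\sum_{v_s\in F(\mathcal V_i),v_t\in F(\mathcal V_j)}\pi_d(v_s,v_t)$. A value $\hat x$ is an $(\epsilon,\delta)$-approximation of $x\ge0$ if $|\hat x-x|\le\epsilon\delta$ when $x<\delta$, and $|\hat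 x-x|\le\epsilon x$ when $x\ge\delta$. Procedure GBP$(G,\mathcal S,\mathcal V_j,r^b_{max})$: set $\hat\pi_d(\mathcal V_i,\mathcal V_j)=0$ for all $\mathcal V_i\in\mathcal S$; set $r(v,\mathcal V_j)=1/|F(\mathcal V_j)|$ for $v\in F(\mathcal V_j)$ and $0$ otherwise. While some $v_k\in V$ has $r(v_k,\mathcal V_j)>r^b_{max}$, pick any such $v_k$ and: if $v_k\in F(\mathcal V_i)$ for some $\mathcal V_i\in\mathcal S$, add $\alpha\,d(v_k)\,r(v_k,\mathcal V_j)/|F(\mathcal V_i)|$ to $\hat\pi_d(\mathcal V_i,\mathcal V_j)$; for each in-neighbor $v_i$ of $v_k$ add $(1-\alpha)\,r(v_k,\mathcal V_j)/d(v_i)$ to $r(v_i,\mathcal V_j)$; then set $r(v_k,\mathcal V_j)=0$. Output the values $\hat\pi_d(\cdot,\mathcal V_j)$. *)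

(* Defs.v *)
From HB Require Import structures.
From mathcomp Require Import all_boot all_order all_algebra.
From mathcomp Require Import all_classical all_reals all_analysis.
From Stdlib Require Import Relation_Operators.
Set Implicit Arguments. Unset Strict Implicit. Unset Printing Implicit Defensive.
Import Order.TTheory GRing.Theory Num.Theory.
Local Open Scope ring_scope.

Section GBP.
Variables (R : realType) (V : finType) (e : rel V) (alpha : R).
(* e u v  <=>  directed edge u -> v *)

Definition outdeg (v : V) : nat := #|[set w | e v w]|.

Fixpoint walkprob (k : nat) (u v : V) : R :=
  match k with
  | 0 => (u == v)%:R
  | k'.+1 => \sum_(w | e u w) walkprob k' w v / (outdeg u)%:R
  end.

(* PPR: pi(u,v) = sum_{k>=0} alpha (1-alpha)^k P^k(u,v), the probability that the
   alpha-terminating walk from u stops at v (stops after exactly k moves w.p.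
   alpha (1-alpha)^k) *)
Definition ppr (u v : V) : R :=
  limn (fun n => \sum_(k < n) alpha * (1 - alpha) ^+ k * walkprob k u v).

Definition pprd (u v : V) : R := (outdeg u)%:R * ppr u v.

Variables (I : finType) (F : I -> {set V}).

Definition pprd_super (i j : I) : R :=
  (#|F i|%:R * #|F j|%:R)^-1 *
  \sum_(vs in F i) \sum_(vt in F j) pprd vs vt.

Definition eps_delta_approx (eps delta xhat x : R) : Prop :=
  (x < delta -> `|xhat - x| <= eps * delta) /\
  (delta <= x -> `|xhat - x| <= eps * x).

(* state of GBP: (pihat(. , V_j), r(. , V_j)) *)
Record gbp_state := GBPState { pihat : I -> R; resid : V -> R }.

Definition gbp_init (j : I) : gbp_state :=
  GBPState (fun _ => 0)
           (fun v => if v \in F j then (#|F j|%:R)^-1 else 0).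

(* one push operation at vk (leaf sets are disjoint, so at most one i has vk in F i) *)
Definition gbp_push (s : gbp_state) (vk : V) : gbp_state :=
  GBPState
    (fun i => pihat s i +
       (if vk \in F i then alpha * (outdeg vk)%:R * resid s vk / #|F i|%:R else 0))
    (fun w => if w == vk then 0
              else resid s w +
                   (if e w vk then (1 - alpha) * resid s vk / (outdeg w)%:R else 0)).

(* one iteration of the while loop: any vk with r(vk) > rmax may be chosen *)
Definition gbp_step (rmax : R) (s s' : gbp_state) : Prop :=
  exists vk, rmax < resid s vk /\ s' = gbp_push s vk.

(* GBP terminates from s: every sequence of (arbitrarily chosen) iterations is finite *)
Definition gbp_terminates (rmax : R) (s : gbp_state) : Prop :=
  Acc (fun s2 s1 => gbp_step rmax s1 s2) s.

(* s is a possible output state: reachable from the initial state, loop condition false *)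
Definition gbp_output (j : I) (rmax : R) (s : gbp_state) : Prop :=
  clos_refl_trans gbp_state (gbp_step rmax) (gbp_init j) s /\
  (forall v, resid s v <= rmax).

Definition avg_leaf_deg (i : I) : R :=
  (#|F i|%:R)^-1 * \sum_(vs in F i) (outdeg vs)%:R.

Definition gbp_rmax (eps delta : R) (j : I) : R :=
  eps * delta / \big[Num.max/0]_(i | i != j) avg_leaf_deg i.

End GBP.

(* Main.v *)
Require Import Defs.
From HB Require Import structures.
From mathcomp Require Import all_boot all_order all_algebra.
From mathcomp Require Import all_classical all_reals all_analysis.
From Stdlib Require Import Relation_Operators.
From mathcomp Require Import ring lra.
Import Order.TTheory GRing.Theory Num.Theory.
Import numFieldNormedType.Exports.
Local Open Scope ring_scope.

Section Walk.
Variables (R : realType) (V : finType) (e : rel V) (alpha : R).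
Hypothesis noloop : forall v : V, ~~ e v v.
Hypothesis degpos : forall v : V, (0 < outdeg e v)%N.
Hypothesis a01 : 0 < alpha < 1.

Local Notation d v := ((outdeg e v)%:R : R).
Local Notation wp := (walkprob R e).

Lemma d_gt0 v : 0 < d v.
Proof. by rewrite ltr0n. Qed.
Lemma d_neq0 v : d v != 0.
Proof. by rewrite gt_eqF // d_gt0. Qed.

Lemma sum_card u (c : R) : \sum_(w | e u w) c = d u * c.
Proof.
rewrite (eq_bigl (fun w => w \in [set w | e u w])); last by move=> w; rewrite inE.
by rewrite sumr_const mulr_natl.
Qed.

Lemma wp_ge0 k u v : 0 <= wp k u v.
Proof.
elim: k u => [|k IH] u /=; first by rewrite ler0n.
by apply: sumr_ge0 => w _; rewrite divr_ge0 // ler0n.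
Qed.

Lemma wp_sum1 k u : \sum_v wp k u v = 1.
Proof.
elim: k u => [|k IH] u /=.
  by rewrite (bigD1 u) //= eqxx big1 ?addr0 // => v /negPf; rewrite eq_sym => ->.
rewrite exchange_big /=.
under eq_bigr do rewrite -mulr_suml IH.
by rewrite sum_card mul1r mulfV // d_neq0.
Qed.

Lemma wp_ck a b u v : wp (a + b) u v = \sum_w wp a u w * wp b w v.
Proof.
elim: a u => [|a IH] u /=.
  rewrite add0n (bigD1 u) //= eqxx mul1r big1 ?addr0 // => w /negPf.
  by rewrite eq_sym => ->; rewrite mul0r.
under eq_bigr do rewrite IH mulr_suml.
rewrite exchange_big /=; apply: eq_bigr => w _.
by rewrite mulr_suml; apply: eq_bigr => x _; rewrite mulrAC.
Qed.

Lemma wp_1 w v : wp 1 w v = (e w v)%:R / d w.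
Proof.
rewrite /= -mulr_suml; congr (_ / _).
case E: (e w v).
  rewrite (bigD1 v) //= eqxx big1 ?addr0 // => x /andP[_ /negPf].
  by rewrite eq_sym => ->.
by rewrite big1 // => x Hx; case: eqP => // Hxv; rewrite Hxv E in Hx.
Qed.

Lemma wp_last k u v : wp k.+1 u v = \sum_(w | e w v) wp k u w / d w.
Proof.
rewrite -addn1 wp_ck [RHS]big_mkcond; apply: eq_bigr => w _.
by rewrite wp_1; case: (e w v); rewrite ?mul1r ?mul0r ?mulr0.
Qed.


Definition S n u v := \sum_(k < n) alpha * (1 - alpha) ^+ k * wp k u v.

Lemma S_rec n u v :
  S n.+1 u v = alpha * (u == v)%:R + (1 - alpha) * \sum_(w | e w v) S n u w / d w.
Proof.
rewrite /S big_ord_recl expr0 mulr1; congr (_ + _).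
under [in RHS]eq_bigr do rewrite mulr_suml.
rewrite exchange_big mulr_sumr; apply: eq_bigr => k _.
rewrite (_ : (lift ord0 k : nat) = k.+1) // wp_last !mulr_sumr; apply: eq_bigr => w _.
rewrite exprS; ring.
Qed.

Lemma geom n : \sum_(k < n) alpha * (1 - alpha) ^+ k = 1 - (1 - alpha) ^+ n.
Proof.
elim: n => [|n IH]; first by rewrite big_ord0 expr0 subrr.
rewrite big_ord_recr /= IH exprSr; ring.
Qed.

Lemma S_ge0 n u v : 0 <= S n u v.
Proof.
case/andP: a01 => a0 a1.
apply: sumr_ge0 => k _; rewrite mulr_ge0 ?wp_ge0 // mulr_ge0 ?exprn_ge0 //;
  [exact: ltW | by rewrite subr_ge0 ltW].
Qed.

Lemma S_sum n u : \sum_v S n u v = 1 - (1 - alpha) ^+ n.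
Proof.
rewrite /S exchange_big -geom; apply: eq_bigr => k _.
by rewrite -mulr_sumr wp_sum1 mulr1.
Qed.

Lemma S_le1 n u v : S n u v <= 1.
Proof.
case/andP: a01 => a0 a1.
apply: (le_trans (y := \sum_v S n u v)).
  rewrite (bigD1 v) //= lerDl; apply: sumr_ge0 => w _; exact: S_ge0.
rewrite S_sum lerBlDr lerDl exprn_ge0 // subr_ge0 ltW //.
Qed.

Lemma S_mono n u v : S n u v <= S n.+1 u v.
Proof.
case/andP: a01 => a0 a1.
rewrite /S big_ord_recr /= lerDl mulr_ge0 ?wp_ge0 // mulr_ge0 ?exprn_ge0 //;
  [exact: ltW | by rewrite subr_ge0 ltW].
Qed.

Lemma S_homo u v : {homo (fun n => S n u v) : n m / (n <= m)%N >-> n <= m}.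
Proof. by apply/(nondecreasing_seqP (fun n => S n u v)) => n; apply: S_mono. Qed.

Lemma S_is_cvg u v : cvgn (fun n => S n u v).
Proof.
apply: nondecreasing_is_cvgn; first exact: S_homo.
by exists 1 => _ [n _ <-]; apply: S_le1.
Qed.

Lemma S_cvg u v : (S n u v @[n --> \oo] --> ppr e alpha u v)%classic.
Proof. exact: S_is_cvg. Qed.

Lemma ppr_ge0 u v : 0 <= ppr e alpha u v.
Proof.
have := nondecreasing_cvgn_le (S_homo u v) (S_is_cvg u v) 0.
by rewrite /S big_ord0.
Qed.

Lemma cvg_bigsum (J : Type) (s : seq J) (P : pred J) (f : J -> nat -> R) (l : J -> R) :
  (forall i, f i n @[n --> \oo] --> l i)%classic ->
  ((\sum_(i <- s | P i) f i n) @[n --> \oo] --> \sum_(i <- s | P i) l i)%classic.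
Proof.
move=> H; elim: s => [|i s IH].
  under eq_fun do rewrite big_nil.
  by rewrite big_nil; apply: cvg_cst.
under eq_fun do rewrite big_cons.
rewrite big_cons; case: (P i) => //.
exact: cvgD.
Qed.

Lemma ppr_sum_le1 u : \sum_v ppr e alpha u v <= 1.
Proof.
have H := @cvg_bigsum V (index_enum V) predT (fun v n => S n u v) (ppr e alpha u) (S_cvg u).
have Hn : (\forall n \near \oo, [set x : R | x <= 1] (\sum_v S n u v))%classic.
  by near=> n; rewrite /= S_sum lerBlDr lerDl exprn_ge0 // subr_ge0 ltW //; case/andP: a01.
exact: (closed_cvg _ (@closed_le R 1) Hn _ H).
Unshelve. all: end_near.
Qed.

Lemma ppr_rec u v : ppr e alpha u v =
  alpha * (u == v)%:R + (1 - alpha) * \sum_(w | e w v) ppr e alpha u w / d w.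
Proof.
have H1 : (S n.+1 u v @[n --> \oo] --> ppr e alpha u v)%classic.
  by rewrite (cvg_shiftS (fun n => S n u v)); apply: S_cvg.
have H2 : (S n.+1 u v @[n --> \oo] -->
   alpha * (u == v)%:R + (1 - alpha) * \sum_(w | e w v) ppr e alpha u w / d w)%classic.
  under eq_fun do rewrite S_rec.
  apply: cvgD; first exact: cvg_cst.
  apply: cvgMl_tmp.
  apply: (@cvg_bigsum V (index_enum V) (fun w => e w v) (fun w n => S n u w / d w) (fun w => ppr e alpha u w / d w)).
  by move=> w; apply: cvgMr_tmp; apply: S_cvg.
exact: (norm_cvg_unique H1 H2).
Qed.

Variables (I : finType) (F : I -> {set V}).
Local Notation st := (gbp_state R V I).
Local Notation push := (gbp_push e alpha F).

Definition Q (s : st) u := \sum_v resid s v * ppr e alpha u v.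
Definition Phi (s : st) := \sum_u Q s u.
Definition Inv (s : st) i :=
  pihat s i + (#|F i|%:R)^-1 * \sum_(u in F i) d u * Q s u.

Lemma resid_push s vk w : resid (push s vk) w =
  resid s w - (if w == vk then resid s vk else 0) +
  (if e w vk then (1 - alpha) * resid s vk / d w else 0).
Proof.
rewrite /=; case: eqP => [->|_]; last by rewrite subr0.
by rewrite (negbTE (noloop vk)) subrr addr0.
Qed.

Lemma Q_push s vk u : Q (push s vk) u = Q s u - alpha * (u == vk)%:R * resid s vk.
Proof.
rewrite /Q; under eq_bigr do rewrite resid_push.
rewrite (eq_bigr (fun v => resid s v * ppr e alpha u v -
   (if v == vk then resid s vk * ppr e alpha u vk else 0) +
   (if e v vk then (1 - alpha) * resid s vk / d v * ppr e alpha u v else 0))); last first.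
  move=> v _; rewrite mulrDl mulrBl; case: eqP => [->|_];
    [rewrite (negbTE (noloop vk)) | case: (e v vk)]; by rewrite ?mul0r ?subr0 ?addr0.
rewrite big_split /= sumrB -big_mkcond big_pred1_eq -big_mkcond /=.
have -> : \sum_(v | e v vk) (1 - alpha) * resid s vk / d v * ppr e alpha u v =
   resid s vk * ((1 - alpha) * \sum_(w | e w vk) ppr e alpha u w / d w).
  by rewrite !mulr_sumr; apply: eq_bigr => v _; ring.
rewrite (ppr_rec u vk); ring.
Qed.

Lemma Phi_push s vk : Phi (push s vk) = Phi s - alpha * resid s vk.
Proof.
rewrite /Phi; under eq_bigr do rewrite Q_push.
rewrite sumrB; congr (_ - _).
rewrite (bigD1 vk) //= eqxx big1 ?addr0; first by rewrite mulr1.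
by move=> u /negPf ->; rewrite mulr0 mul0r.
Qed.

Lemma Inv_push s vk i : Inv (push s vk) i = Inv s i.
Proof.
rewrite /Inv /=; under eq_bigr do rewrite Q_push.
under eq_bigr do rewrite mulrBr.
rewrite sumrB.
have -> : \sum_(u in F i) d u * (alpha * (u == vk)%:R * resid s vk) =
    (vk \in F i)%:R * (d vk * (alpha * resid s vk)).
  rewrite big_mkcond (bigD1 vk) //= big1 ?addr0; last first.
    by move=> u /negPf Hu; rewrite Hu mulr0 mul0r mulr0; case: ifP.
  by case: ifP => _; rewrite ?eqxx ?mulr1 ?mul1r ?mul0r.
case: (vk \in F i) => /=; ring.
Qed.

Lemma Inv_init j i : Inv (gbp_init R F j) i = pprd_super e alpha F i j.
Proof.
rewrite /Inv /pprd_super /= add0r invfM -mulrA; congr (_ * _).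
rewrite mulr_sumr; apply: eq_bigr => u _.
rewrite /Q mulr_sumr [RHS]mulr_sumr [RHS]big_mkcond; apply: eq_bigr => v _.
rewrite /pprd /=; case: ifP => _; last by rewrite !mul0r mulr0.
ring.
Qed.

Lemma resid_push_ge0 s vk : (forall v, 0 <= resid s v) -> forall w, 0 <= resid (push s vk) w.
Proof.
case/andP: a01 => a0 a1 Hr w /=; case: eqP => // _.
apply: addr_ge0 => //; case: ifP => // _.
by rewrite divr_ge0 ?ler0n // mulr_ge0 // subr_ge0 ltW.
Qed.

Lemma Q_ge0 s u : (forall v, 0 <= resid s v) -> 0 <= Q s u.
Proof. by move=> Hr; apply: sumr_ge0 => v _; rewrite mulr_ge0 ?ppr_ge0. Qed.

Lemma Phi_ge0 s : (forall v, 0 <= resid s v) -> 0 <= Phi s.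
Proof. by move=> Hr; apply: sumr_ge0 => u _; apply: Q_ge0. Qed.

Lemma Q_le s u m : 0 <= m -> (forall v, 0 <= resid s v) -> (forall v, resid s v <= m) ->
  Q s u <= m.
Proof.
move=> m0 Hr Hm.
apply: (le_trans (y := \sum_v m * ppr e alpha u v)).
  by apply: ler_sum => v _; rewrite ler_wpM2r ?ppr_ge0.
rewrite -mulr_sumr -[X in _ <= X]mulr1 ler_wpM2l //; exact: ppr_sum_le1.
Qed.

Lemma reach_pres rmax (C : I -> R) x y :
  clos_refl_trans st (gbp_step e alpha F rmax) x y ->
  (forall v, 0 <= resid x v) /\ (forall i, Inv x i = C i) ->
  (forall v, 0 <= resid y v) /\ (forall i, Inv y i = C i).
Proof.
elim => //.
- move=> s1 s2 [vk [_ ->]] [Hr HI]; split; first exact: resid_push_ge0.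
  by move=> i; rewrite Inv_push.
- by move=> ? ? ? _ H1 _ H2 H; apply: H2; apply: H1.
Qed.

Lemma term_aux rmax (hc : 0 < rmax) N : forall s, (forall v, 0 <= resid s v) ->
  Phi s < N%:R * (alpha * rmax) ->
  Acc (fun s2 s1 => gbp_step e alpha F rmax s1 s2) s.
Proof.
case/andP: a01 => a0 a1.
elim: N => [|N IH] s Hr HP.
  by move: HP; rewrite mul0r ltNge Phi_ge0.
constructor => s' [vk [Hlt ->]].
apply: IH; first exact: resid_push_ge0.
rewrite Phi_push.
have H1 : alpha * rmax < alpha * resid s vk by rewrite ltr_pM2l.
move: HP H1; rewrite -natr1 mulrDl mul1r.
set c := alpha * rmax; set x := alpha * resid s vk; set y := N%:R * c.
move=> HP H1; lra.
Qed.

End Walk.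

Theorem lemma3 (R : realType) (V : finType) (e : rel V) (alpha : R)
    (I : finType) (F : I -> {set V}) (eps delta : R) (j : I) :
  (forall v : V, ~~ e v v) ->
  (forall v : V, (0 < outdeg e v)%N) ->
  0 < alpha < 1 ->
  (forall i : I, F i != finset.set0) ->
  (forall i1 i2 : I, i1 != i2 -> [disjoint F i1 & F i2]) ->
  (2 <= #|I|)%N ->
  0 < eps -> 0 < delta ->
  gbp_terminates e alpha F (gbp_rmax e F eps delta j) (gbp_init R F j) /\
  (forall s, gbp_output e alpha F j (gbp_rmax e F eps delta j) s ->
     forall i : I, i != j ->
       eps_delta_approx eps delta (pihat s i) (pprd_super e alpha F i j)).
Proof.
move=> noloop degpos a01 Fne disj I2 eps0 delta0.
have [a0 a1] := andP a01.
set M := \big[Num.max/0]_(i | i != j) avg_leaf_deg R e F i.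
have avg_gt0 i : 0 < avg_leaf_deg R e F i.
  rewrite /avg_leaf_deg mulr_gt0 // ?invr_gt0 ?ltr0n ?card_gt0 //.
  have [v Hv] := set0Pn _ (Fne i).
  rewrite (bigD1 v) //=; apply: (lt_le_trans (@d_gt0 R V e degpos v)).
  by rewrite lerDl; apply: sumr_ge0 => w _; rewrite ler0n.
have Mge i : i != j -> avg_leaf_deg R e F i <= M.
  by move=> Hij; rewrite /M; exact: (le_bigmax_cond 0 (P := fun i => i != j) (avg_leaf_deg R e F) Hij).
have [i0 Hi0] : exists i, i != j.
  have [x [y [_ _ xy]]] := card_gt1P I2.
  case: (eqVneq x j) => [Exj|Hx]; last by exists x.
  by exists y; rewrite -Exj eq_sym.
have M0 : 0 < M := lt_le_trans (avg_gt0 i0) (Mge i0 Hi0).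
set rmax := gbp_rmax e F eps delta j.
have rmaxE : rmax = eps * delta / M by [].
have rmax0 : 0 < rmax by rewrite rmaxE divr_gt0 // mulr_gt0.
have Hr0 : forall v, 0 <= resid (gbp_init R F j) v.
  by move=> v /=; case: ifP => _ //; rewrite invr_ge0 ler0n.
split.
  have c0 : 0 < alpha * rmax by rewrite mulr_gt0.
  set P0 := Phi R V e alpha I (gbp_init R F j).
  have P00 : 0 <= P0 / (alpha * rmax).
    apply: divr_ge0; [exact: (@Phi_ge0 R V e alpha degpos a01 I _ Hr0) | exact: ltW].
  apply: (@term_aux R V e alpha noloop degpos a01 I F rmax rmax0 ( Num.Def.archi_bound (P0 / (alpha * rmax)))) => //.
  by rewrite -ltr_pdivrMr //; apply: archi_boundP.
move=> s [Hreach Hout] i Hij.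
have [Hr HI] := @reach_pres R V e alpha noloop degpos a01 I F rmax
  (fun i => pprd_super e alpha F i j) _ _ Hreach (conj Hr0 (@Inv_init R V e alpha I F j)).
set err := (#|F i|%:R)^-1 * \sum_(u in F i) (outdeg e u)%:R * Q R V e alpha I s u.
have Hpi : pihat s i = pprd_super e alpha F i j - err.
  by rewrite -(HI i) /Inv /err addrK.
have err0 : 0 <= err.
  rewrite /err mulr_ge0 ?invr_ge0 ?ler0n //; apply: sumr_ge0 => u _.
  by rewrite mulr_ge0 ?ler0n // (@Q_ge0 R V e alpha degpos a01).
have errle : err <= eps * delta.
  apply: (le_trans (y := rmax * avg_leaf_deg R e F i)).
    rewrite /err /avg_leaf_deg mulrCA ler_wpM2l ?invr_ge0 ?ler0n // mulr_sumr.
    apply: ler_sum => u _; rewrite mulrC ler_wpM2r ?ler0n //.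
    exact: (@Q_le R V e alpha degpos a01 I s u rmax (ltW rmax0) Hr Hout).
  rewrite rmaxE mulrAC ler_pdivrMr // ler_wpM2l ?Mge // mulr_ge0 // ltW //.
have Habs : `|pihat s i - pprd_super e alpha F i j| = err.
  by rewrite Hpi addrAC subrr add0r normrN ger0_norm.
split => Hx; rewrite Habs //.
exact: (le_trans errle (ler_wpM2l (ltW eps0) Hx)).
Qed.
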